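(* The 2-color Rado number of $L(m,3)$ equals $C(m,3)=\left\lceil \frac{m-1}{3}\left\lceil \frac{m-1}{3}\right\rceil\right\rceil$ for every integer $m\geq 7$. For $m=6,5,4,3$ the 2-color Rado number of $L(m,3)$ is $5,4,1,9$, respectively.
   Context: For integers $m\geq 3$, $a\geq 1$, $L(m,a)$ denotes the equation $x_1+x_2+\cdots+x_{m-1}=a x_m$. For a positive integer $n$, $[n]=\{1,\dots,n\}$. A solution of $L(m,a)$ in $[n]$ is an $m$-tuple $(x_1,\dots,x_m)\in[n]^m$ (entries not necessarily distinct) satisfying the equation; given a 2-coloring of $[n]$, it is monochromatic if all $x_i$ have the same color. The 2-color Rado number of $L(m,a)$ is the least positive integer $n$ such that every 2-coloring of $[n]$ admits a monochromatic solution of $L(m,a)$ in $[n]$. *)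

(* Defs.v *)
From mathcomp Require Import all_boot.
Set Implicit Arguments. Unset Strict Implicit. Unset Printing Implicit Defensive.

(* A solution of L(m,a): x_1+...+x_{m-1} = a x_m.  The tuple (x_1,...,x_m)
   is represented by xs : 'I_m.-1 -> nat (for x_1..x_{m-1}) and xm (for x_m). *)
Definition is_solution (m a : nat) (xs : 'I_m.-1 -> nat) (xm : nat) : Prop :=
  \sum_(i < m.-1) xs i = a * xm.

Definition in_range (n : nat) (m : nat) (xs : 'I_m.-1 -> nat) (xm : nat) : Prop :=
  (forall i, 1 <= xs i <= n) /\ 1 <= xm <= n.

(* a 2-coloring of [n] is any c : nat -> bool (only values on [n] matter) *)
Definition monochromatic (c : nat -> bool) (m : nat) (xs : 'I_m.-1 -> nat) (xm : nat) : Prop :=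
  forall i, c (xs i) = c xm.

Definition rado_property (m a n : nat) : Prop :=
  forall c : nat -> bool, exists (xs : 'I_m.-1 -> nat) (xm : nat),
    in_range n xs xm /\ is_solution a xs xm /\ monochromatic c xs xm.

Definition is_rado_number (m a r : nat) : Prop :=
  0 < r /\ rado_property m a r /\ (forall n, 0 < n -> rado_property m a n -> r <= n).

Definition ceil_div (p q : nat) : nat := (p + q.-1) %/ q.

(* C(m,3) = ceil( (m-1)/3 * ceil((m-1)/3) ) = ceil( (m-1)*ceil((m-1)/3) / 3 ) *)
Definition C3 (m : nat) : nat := ceil_div ((m - 1) * ceil_div (m - 1) 3) 3.

(* Main.v *)
Require Import Defs.
From mathcomp Require Import all_boot zify.
Set Implicit Arguments. Unset Strict Implicit. Unset Printing Implicit Defensive.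

Definition reach (P : nat -> Prop) (n s : nat) : Prop :=
  exists f : nat -> nat, (forall i, i < n -> P (f i)) /\ \sum_(i < n) f i = s.

Lemma reach0 P : reach P 0 0.
Proof. exists (fun _ => 0); split => //; by rewrite big_ord0. Qed.

Lemma reach1 (P : nat -> Prop) v : P v -> reach P 1 v.
Proof. move=> hv; exists (fun _ => v); split => //; by rewrite big_ord1. Qed.

Lemma reach_add P n1 n2 s1 s2 : reach P n1 s1 -> reach P n2 s2 -> reach P (n1+n2) (s1+s2).
Proof.
move=> [f1 [H1 E1]] [f2 [H2 E2]].
exists (fun i => if i < n1 then f1 i else f2 (i - n1)); split.
  move=> i hi; case: ifP => h; first exact: H1. apply: H2. move/negbT: h; lia.
rewrite big_split_ord /= -E1 -E2; congr (_ + _); apply: eq_bigr => i _ /=.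
  by rewrite ltn_ord.
by rewrite ltnNge leq_addr /= addKn.
Qed.

Lemma reach_eq P n s n' s' : reach P n s -> n = n' -> s = s' -> reach P n' s'.
Proof. by move=> h <- <-. Qed.

Lemma reach_const (P : nat -> Prop) v n : P v -> reach P n (n * v).
Proof.
move=> hv; elim: n => [|n IH]; first exact: reach0.
apply: reach_eq (reach_add (reach1 hv) IH) _ _; lia.
Qed.

Lemma reach_interval (P : nat -> Prop) lo hi n s :
  (forall x, lo <= x <= hi -> P x) -> n * lo <= s <= n * hi -> reach P n s.
Proof.
move=> hP; elim: n s => [|n IH] s hs.
  have -> : s = 0 by lia. exact: reach0.
have hlh : lo <= hi.
  have : n.+1 * lo <= n.+1 * hi by lia.
  by rewrite leq_pmul2l.
have hnn : n * lo <= n * hi by rewrite leq_mul2l hlh orbT.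
rewrite !mulSn in hs.
pose x := minn hi (s - n * lo).
have hx : lo <= x <= hi by rewrite /x; lia.
have hr : n * lo <= s - x <= n * hi by rewrite /x; lia.
apply: reach_eq (reach_add (reach1 (hP x hx)) (IH (s - x) hr)) _ _; rewrite /x; lia.
Qed.

Lemma reach_mono (P Q : nat -> Prop) n s : (forall x, P x -> Q x) -> reach P n s -> reach Q n s.
Proof. move=> hPQ [f [H E]]; exists f; split => // i hi; exact/hPQ/H. Qed.

Lemma sol_of_reach k N (c : nat -> bool) z : 1 <= z <= N ->
  reach (fun x => 1 <= x <= N /\ c x = c z) k (3 * z) ->
  exists (xs : 'I_k.+1.-1 -> nat) (xm : nat),
    in_range N xs xm /\ is_solution 3 xs xm /\ monochromatic c xs xm.
Proof.
move=> hz [f [Hf Ef]]; exists (fun i : 'I_k => f i), z.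
split; [split|split] => //; try (by move=> i; case: (Hf i (ltn_ord i))).
Qed.

Lemma sum_lb k (f : 'I_k -> nat) lo : (forall i, lo <= f i) -> k * lo <= \sum_(i<k) f i.
Proof.
elim: k f => [|k IH] f hf; first by rewrite big_ord0.
rewrite big_ord_recr /= mulSn addnC leq_add //; exact: IH.
Qed.

Fixpoint sums (S : seq nat) (k : nat) : seq nat :=
  match k with 0 => [:: 0] | k'.+1 => undup [seq x + y | x <- S, y <- sums S k'] end.

Lemma sums_sound S k s : s \in sums S k -> reach (fun x => x \in S) k s.
Proof.
elim: k s => [|k IH] s /=; first by rewrite inE => /eqP ->; exact: reach0.
rewrite mem_undup => /allpairsP [[x y] [/= hx hy ->]].
exact: (reach_add (reach1 hx) (IH _ hy)).
Qed.

Lemma sums_complete S k (g : 'I_k -> nat) : (forall i, g i \in S) -> \sum_(i<k) g i \in sums S k.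
Proof.
elim: k g => [|k IH] g hg; first by rewrite big_ord0 inE.
rewrite big_ord_recr /= mem_undup; apply/allpairsP.
exists (g ord_max, \sum_(i < k) g (widen_ord (leqnSn k) i)); split => //=.
- by apply: IH.
- by rewrite addnC.
Qed.

Definition mono_exists (k n : nat) (c : nat -> bool) : bool :=
  has (fun z => (3*z) \in sums (filter (fun x => c x == c z) (iota 1 n)) k) (iota 1 n).

Lemma mono_sound k n c : mono_exists k n c ->
  exists (xs : 'I_k.+1.-1 -> nat) (xm : nat),
    in_range n xs xm /\ is_solution 3 xs xm /\ monochromatic c xs xm.
Proof.
case/hasP => z; rewrite mem_iota => hz /sums_sound hr.
apply: (sol_of_reach (N := n) (z := z)); first lia.
apply: reach_mono hr => x; rewrite mem_filter mem_iota => /andP [/eqP -> h]; split => //; lia.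
Qed.

Lemma mono_complete k n c (xs : 'I_k.+1.-1 -> nat) xm :
  in_range n xs xm -> is_solution 3 xs xm -> monochromatic c xs xm -> mono_exists k n c.
Proof.
move=> [hxs hxm] hsol hmono; apply/hasP; exists xm; first by rewrite mem_iota; lia.
rewrite -hsol; apply: sums_complete => i.
rewrite mem_filter mem_iota hmono eqxx /=; have := hxs i; lia.
Qed.

Lemma mono_ext k n c1 c2 : {in iota 1 n, c1 =1 c2} -> mono_exists k n c1 = mono_exists k n c2.
Proof.
move=> E; apply: eq_in_has => z hz /=; rewrite (E z hz).
congr (_ \in sums _ _); apply: eq_in_filter => x hx; by rewrite (E x hx).
Qed.

Lemma mono_nth k n c : mono_exists k n c = mono_exists k n (fun x => nth false (map c (iota 0 n.+1)) x).
Proof.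
apply: mono_ext => x; rewrite mem_iota => hx.
rewrite (nth_map 0) ?size_iota; last lia.
by rewrite nth_iota; last lia.
Qed.

Lemma small_upper k n : (forall c, mono_exists k n c) -> rado_property k.+1 3 n.
Proof. move=> h c; exact: mono_sound. Qed.

Lemma small_lower k r c0 : ~~ mono_exists k r.-1 c0 ->
  forall n, 0 < n -> rado_property k.+1 3 n -> r <= n.
Proof.
move=> hc n hn hr; rewrite leqNgt; apply/negP => hlt.
case: (hr c0) => xs [xm [[h1 h2] [hs hm]]].
move/negP: hc; apply; apply: mono_complete hs hm; split.
- move=> i; have := h1 i; lia.
- lia.
Qed.

Lemma m6 : is_rado_number 6 3 5.
Proof.
split => //; split.
  apply: small_upper => c; rewrite mono_nth /=.
  case: (c 0); case: (c 1); case: (c 2); case: (c 3); case: (c 4); case: (c 5); by vm_compute.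
apply: (@small_lower 5 5 (fun x => x \in [:: 2; 3])); by vm_compute.
Qed.

Lemma m5 : is_rado_number 5 3 4.
Proof.
split => //; split.
  apply: small_upper => c; rewrite mono_nth /=.
  case: (c 0); case: (c 1); case: (c 2); case: (c 3); case: (c 4); by vm_compute.
apply: (@small_lower 4 4 (fun x => x \in [:: 2])); by vm_compute.
Qed.

Lemma m4 : is_rado_number 4 3 1.
Proof.
split => //; split; last by [].
apply: small_upper => c; rewrite mono_nth /=.
case: (c 0); case: (c 1); by vm_compute.
Qed.

Lemma m3 : is_rado_number 3 3 9.
Proof.
split => //; split.
  apply: small_upper => c; rewrite mono_nth /=.
  case: (c 0); case: (c 1); case: (c 2); case: (c 3); case: (c 4);
  case: (c 5); case: (c 6); case: (c 7); case: (c 8); case: (c 9); by vm_compute.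
apply: (@small_lower 2 9 (fun x => x \in [:: 1; 3; 4; 7])); by vm_compute.
Qed.

Lemma three_mult n : exists i L, i < 3 /\ n + i = 3 * L.
Proof. exists (3 * ((n+2)%/3) - n), ((n+2)%/3); lia. Qed.

Lemma upper k (c : nat -> bool) : 6 <= k ->
  let q := (k+2)%/3 in let C := (k*q+2)%/3 in
  exists z, 1 <= z <= C /\ reach (fun x => 1 <= x <= C /\ c x = c z) k (3*z).
Proof.
move=> hk q C.
have hq : k <= 3 * q <= k + 2 by rewrite /q; lia.
have hkq : 6 * q <= k * q by rewrite leq_mul2r hk orbT.
have hC : k * q <= 3 * C <= k * q + 2 by rewrite /C; lia.
have hq3 : 7 <= k -> 3 * k <= k * q.
  move=> h7; rewrite [3*k]mulnC leq_mul2l; apply/orP; right; lia.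
have hCk : 7 <= k -> k <= C by move=> h; have := hq3 h; lia.
have hCk2 : k - 2 <= C.
  case: (ltnP 6 k) => h; first by have := hCk h; lia.
  have e : k = 6 by lia.
  by rewrite /C /q e.
pose R x := 1 <= x <= C /\ c x = c 1.
pose B x := 1 <= x <= C /\ c x = ~~ c 1.
have col x : c x = c 1 \/ c x = ~~ c 1 by case: (c x); case: (c 1); auto.
have fin_red z : 1 <= z <= C -> c z = c 1 -> reach R k (3*z) ->
  exists z, 1 <= z <= C /\ reach (fun x => 1 <= x <= C /\ c x = c z) k (3*z).
  by move=> hz e h; exists z; split => //; rewrite e.
have fin_blue z : 1 <= z <= C -> c z = ~~ c 1 -> reach B k (3*z) ->
  exists z, 1 <= z <= C /\ reach (fun x => 1 <= x <= C /\ c x = c z) k (3*z).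
  by move=> hz e h; exists z; split => //; rewrite e.
have R1 : R 1 by split => //; lia.
case: (col 2) => c2.
-
  have R2 : R 2 by split => //; lia.
  have red12 x : 1 <= x <= 2 -> R x.
    move=> hx; have : (x == 1) || (x == 2) by lia.
    by case/orP => /eqP ->.
  have hq1 : 1 <= q <= C by lia.
  case: (col q) => cq.
    apply: (fin_red q hq1 cq); apply: (reach_interval red12); lia.
  have Bq : B q by [].
  have hq2 : 1 <= q.+1 <= C by lia.
  case: (col q.+1) => cq1.
    apply: (fin_red q.+1 hq2 cq1); apply: (reach_interval red12); lia.
  have Bq1 : B q.+1 by [].
  pose pb x := (1 <= x <= C) && (c x != c 1).
  have exq : exists x, pb x by exists q; rewrite /pb hq1 cq; case: (c 1).
  case: (ex_minnP exq) => b /andP [hb cb] bmin.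
  have b3 : 3 <= b.
    rewrite leqNgt; apply/negP => hb3; have : (b == 1) || (b == 2) by lia.
    by case/orP => /eqP e; move: cb; rewrite e ?c2 eqxx.
  have bq : b <= q by apply: bmin; rewrite /pb hq1 cq; case: (c 1).
  have Bb : B b.
    split => //; case: (col b) => e //; by rewrite e eqxx in cb.
  have redint x : 1 <= x <= b - 1 -> R x.
    move=> hx; split; first lia.
    case: (col x) => e //.
    have : b <= x by apply: bmin; rewrite /pb e; apply/andP; split; [lia | case: (c 1)].
    lia.
  have [i [L [hi3 HL]]] := three_mult ((k-2)*b + 2*q).
  have f1 : (k-2)*b <= (k-2)*q by rewrite leq_mul2l bq orbT.
  have f2 : (k-2)*q + 2*q = k*q by rewrite -mulnDl subnK //; lia.
  have f3 : (k-2)*3 <= (k-2)*b by rewrite leq_mul2l b3 orbT.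
  have f4 : (k-2)*(b-1) + (k-2) = (k-2)*b.
    by rewrite -[X in _ + X]muln1 -mulnDr subnK //; lia.
  have hL : 1 <= L <= C by lia.
  case: (col L) => cL.
    apply: (fin_red L hL cL).
    have RL : R L by [].
    have hI : (k-2) * 1 <= L <= (k-2) * (b-1) by lia.
    apply: reach_eq (reach_add (reach_const 2 RL) (reach_interval redint hI)) _ _; lia.
  apply: (fin_blue L hL cL).
  move: HL; case: i hi3 => [|[|[|i]]] // _ HL.
  + apply: reach_eq (reach_add (reach_const (k-2) Bb) (reach_const 2 Bq)) _ _; lia.
  + apply: reach_eq (reach_add (reach_const (k-2) Bb)
        (reach_add (reach_const 1 Bq) (reach_const 1 Bq1))) _ _; lia.
  + apply: reach_eq (reach_add (reach_const (k-2) Bb) (reach_const 2 Bq1)) _ _; lia.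
-
  have B2 : B 2 by split => //; lia.
  have hz2 : 1 <= k - 2 <= C by lia.
  have red_k2 : c (k-2) = c 1 -> reach R k (3 * (k-2)).
    move=> e; have Rz : R (k-2) by [].
    apply: reach_eq (reach_add (reach_const (k-2) R1) (reach_const 2 Rz)) _ _; lia.
  have h4 : 4 <= C by lia.
  case: (col 3) => c3.
  + have R3 : R 3 by split => //; lia.
    case: (col 4) => c4.
    * have R4 : R 4 by split => //; lia.
      case: (ltnP 6 k) => h7.
      - have hz : 1 <= k - 1 <= C by have := hCk h7; lia.
        case: (col (k-1)) => cz.
          apply: (fin_red (k-1) hz cz).
          apply: reach_eq (reach_add (reach1 R4)
             (reach_add (reach_const (k-3) R3) (reach_const 2 R1))) _ _; lia.
        apply: (fin_blue (k-1) hz cz).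
        have Bz : B (k-1) by [].
        apply: reach_eq (reach_add (reach_const (k-1) B2) (reach1 Bz)) _ _; lia.
      - have e : k = 6 by lia.
        apply: (fin_red 4 _ c4); first lia.
        apply: reach_eq (reach_add (reach_const 4 R1) (reach_const 2 R4)) _ _; lia.
    * have B4 : B 4 by split => //; lia.
      have Hk : k = odd k + k./2 * 2 by rewrite muln2 odd_double_half.
      move: Hk; set h := k./2; case: (odd k) => /= Hk.
      - have hz : 1 <= k - 1 <= C by have := hCk ltac:(lia); lia.
        case: (col (k-1)) => cz.
          apply: (fin_red (k-1) hz cz).
          have Rz : R (k-1) by [].
          apply: reach_eq (reach_add (reach1 Rz)
             (reach_add (reach_const h R3) (reach_const h R1))) _ _; lia.
        apply: (fin_blue (k-1) hz cz).
        apply: reach_eq (reach_add (reach_const (h-1) B4) (reach_const (h+2) B2)) _ _; lia.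
      - case: (col (k-2)) => cz.
          exact: (fin_red (k-2) hz2 cz (red_k2 cz)).
        apply: (fin_blue (k-2) hz2 cz).
        apply: reach_eq (reach_add (reach_const (h+3) B2) (reach_const (h-3) B4)) _ _; lia.
  + have B3 : B 3 by split => //; lia.
    case: (col (k-2)) => cz.
      exact: (fin_red (k-2) hz2 cz (red_k2 cz)).
    apply: (fin_blue (k-2) hz2 cz).
    apply: reach_eq (reach_add (reach_const 6 B2) (reach_const (k-6) B3)) _ _; lia.
Qed.

Lemma lower k : 6 <= k ->
  let q := (k+2)%/3 in let C := (k*q+2)%/3 in
  forall n, 0 < n -> rado_property k.+1 3 n -> C <= n.
Proof.
move=> hk q C n hn hr.
have hq : k <= 3 * q <= k + 2 by rewrite /q; lia.
have hC : k * q <= 3 * C <= k * q + 2 by rewrite /C; lia.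
rewrite leqNgt; apply/negP => hlt.
case: (hr (fun x => x < q)) => xs [xm [[h1 h2] [hs hm]]].
rewrite /is_solution /= in hs.
case: (ltnP xm q) => hx.
- have : k * 1 <= 3 * xm by rewrite -hs; apply: sum_lb => i; have := h1 i; lia.
  lia.
- have : k * q <= 3 * xm.
    rewrite -hs.
    apply: sum_lb => i; have := hm i; rewrite /= [xm < q]ltnNge hx /=.
    by move/negbT; rewrite -leqNgt.
  lia.
Qed.

Lemma rado_gen k : 6 <= k -> is_rado_number k.+1 3 ((k * ((k+2)%/3) + 2) %/ 3).
Proof.
move=> hk; split; [|split].
- have hq : k <= 3 * ((k+2)%/3) by lia.
  have : 6 * ((k+2)%/3) <= k * ((k+2)%/3) by rewrite leq_mul2r hk orbT.
  lia.
- move=> c; case: (upper c hk) => z [hz hr]; exact: sol_of_reach hz hr.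
- exact: lower.
Qed.

Theorem theorem2 :
  (forall m : nat, 7 <= m -> is_rado_number m 3 (C3 m)) /\
  is_rado_number 6 3 5 /\ is_rado_number 5 3 4 /\
  is_rado_number 4 3 1 /\ is_rado_number 3 3 9.
Proof.
split; last by split; [exact: m6 | split; [exact: m5 | split; [exact: m4 | exact: m3]]].
case => // k hk.
have -> : C3 k.+1 = (k * ((k+2)%/3) + 2) %/ 3 by rewrite /C3 /ceil_div subn1.
exact: rado_gen.
Qed.
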